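(* Let $(M,J)$ be an almost complex manifold (not necessarily integrable, not necessarily compact), and let $\phi^k:H^k_J(M)\to H^k_{dR}(M)$ be the natural map. Then $M$ satisfies the $\mathrm d\mathcal L_J$-lemma in degree $k$, i.e. $$(\operatorname{im}\mathcal L_J)^k\cap(\ker\mathrm d)^k=(\operatorname{im}\mathrm d\mathcal L_J)^k,$$ if and only if $\phi^k$ is injective and $\phi^{k-1}$ is surjective.
   Context: For a vector-valued $k$-form $K=K^je_j$ on $M$, $\iota_K\alpha=K^j\wedge(\iota_{e_j}\alpha)$ and $\mathcal L_K=\iota_K\mathrm d-(-1)^{k-1}\mathrm d\iota_K$. For an almost complex structure $J$ ($J^2=-I$), $\mathcal L_J$ has degree $1$ and $\mathrm d\mathcal L_J=-\mathcal L_J\mathrm d$, so $\mathrm d$ preserves $(\ker\mathcal L_J)^k=\{\alpha\in\Omega^k(M):\mathcal L_J\alpha=0\}$; $H^k_J(M)$ is the $k$-th cohomology of $((\ker\mathcal L_J)^\bullet,\mathrm d)$ and $\phi^k$ is induced by the inclusion into $\Omega^\bullet(M)$. Notation (real forms): $(\operatorname{im}\mathcal L_J)^k=\mathcal L_J(\Omega^{k-1}(M))$, $(\operatorname{im}\mathrm d\mathcal L_J)^k=\mathrm d\mathcal L_J(\Omega^{k-2}(M))$, $(\ker\mathrm d)^k$ the closed $k$-forms. *)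

(* Defs.v *)
(* Abstract algebraic model of the (real) de Rham complex of an
   almost complex manifold together with the contraction iota_J. *)
From HB Require Import structures.
From mathcomp Require Import all_boot all_order all_algebra.
Set Implicit Arguments. Unset Strict Implicit. Unset Printing Implicit Defensive.
Import GRing.Theory.
Local Open Scope ring_scope.

Section DLJ.
Variables (R : nzRingType) (Om : nat -> lmodType R)
  (d : forall k, {linear Om k -> Om k.+1})
  (iJ : forall k, {linear Om k -> Om k}).

(* L_J = iota_J d - (-1)^(1-1) d iota_J  (J is a vector-valued 1-form) *)
Definition LJ k (x : Om k) : Om k.+1 := iJ k.+1 (d k x) - d k (iJ k x).

Definition kerLJ k (x : Om k) : Prop := LJ x = 0.
Definition closedf k (x : Om k) : Prop := d k x = 0.

(* exact in Omega^k(M) (Omega^{-1} = 0) *)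
Definition exactf k : Om k -> Prop :=
  match k return Om k -> Prop with
  | 0 => fun x => x = 0
  | j.+1 => fun x => exists y : Om j, d j y = x
  end.

(* exact in the subcomplex ((ker L_J)^., d) *)
Definition exactJ k : Om k -> Prop :=
  match k return Om k -> Prop with
  | 0 => fun x => x = 0
  | j.+1 => fun x => exists y : Om j, kerLJ y /\ d j y = x
  end.

(* phi^k : H^k_J -> H^k_dR,  [a]_J |-> [a]_dR, is injective *)
Definition phi_injective k : Prop :=
  forall a b : Om k, kerLJ a -> closedf a -> kerLJ b -> closedf b ->
    exactf (a - b) -> exactJ (a - b).

Definition phi_surjective k : Prop :=
  forall a : Om k, closedf a ->
    exists b : Om k, [/\ kerLJ b, closedf b & exactf (a - b)].

(* phi^(k-1) surjective; H^{-1} = 0 so trivially true for k = 0 *)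
Definition phi_prev_surjective k : Prop :=
  match k with 0 => True | j.+1 => phi_surjective j end.

Definition imLJ k : Om k -> Prop :=
  match k return Om k -> Prop with
  | 0 => fun x => x = 0
  | j.+1 => fun x => exists y : Om j, LJ y = x
  end.

Definition imdLJ k : Om k -> Prop :=
  match k return Om k -> Prop with
  | 0 => fun x => x = 0
  | 1 => fun x => x = 0
  | j.+2 => fun x => exists y : Om j, d j.+1 (LJ y) = x
  end.

Definition dLJ_lemma k : Prop :=
  forall x : Om k, (imLJ x /\ closedf x) <-> imdLJ x.

End DLJ.

(* Main.v *)
Require Import Defs.
From HB Require Import structures.
From mathcomp Require Import all_boot all_order all_algebra.
Set Implicit Arguments. Unset Strict Implicit. Unset Printing Implicit Defensive.
Import GRing.Theory.
Local Open Scope ring_scope.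

Section H.
Variables (R : nzRingType) (Om : nat -> lmodType R)
  (d : forall k, {linear Om k -> Om k.+1})
  (iJ : forall k, {linear Om k -> Om k})
  (dd : forall k (x : Om k), d k.+1 (d k x) = 0%R).

Lemma LJB k (x y : Om k) : LJ d iJ (x - y) = LJ d iJ x - LJ d iJ y.
Proof.
rewrite /LJ !raddfB /=. idtac.
by rewrite addrACA.
Qed.

Lemma LJ0 k : LJ d iJ (0 : Om k) = 0.
Proof. by rewrite -(subrr (0 : Om k)) LJB subrr. Qed.

Lemma LJd k (x : Om k) : LJ d iJ (d k x) = - d k.+1 (LJ d iJ x).
Proof. by rewrite /LJ dd raddf0 sub0r raddfB /= dd subr0. Qed.

Lemma LJN k (x : Om k) : LJ d iJ (- x) = - LJ d iJ x.
Proof. by rewrite -sub0r LJB LJ0 sub0r. Qed.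

Lemma closedLJ k (x : Om k) : closedf d x -> closedf d (LJ d iJ x).
Proof.
rewrite /closedf => Cx; apply/eqP; rewrite -oppr_eq0 -LJd Cx.
by rewrite -(LJ0 k.+1).
Qed.

Lemma exact_closed k (t : Om k) : exactf d t -> closedf d t.
Proof.
case: k t => [|k] t /=; rewrite /closedf.
  by move->; rewrite raddf0.
by case=> y <-; rewrite dd.
Qed.

Lemma h1 j (x : Om j.+1) : imdLJ d iJ x -> exists t : Om j, exactf d t /\ LJ d iJ t = x.
Proof.
case: j x => [|i] x /=.
  by move->; exists 0; split => //; rewrite LJ0.
case=> z <-; exists (d i (- z)); split; first by exists (- z).
by rewrite LJd LJN raddfN opprK.
Qed.

Lemma h3 j (t : Om j) : exactf d t -> imdLJ d iJ (LJ d iJ t).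
Proof.
case: j t => [|i] t /=.
  by move->; rewrite LJ0.
case=> z <-; exists (- z).
by rewrite LJd LJN raddfN.
Qed.
End H.

Theorem theorem3p18 (R : nzRingType) (Om : nat -> lmodType R)
  (d : forall k, {linear Om k -> Om k.+1})
  (iJ : forall k, {linear Om k -> Om k})
  (dd : forall k (x : Om k), d k.+1 (d k x) = 0%R)
  (k : nat) :
  dLJ_lemma d iJ k <->
  (phi_injective d iJ k /\ phi_prev_surjective d iJ k).
Proof.
case: k => [|j].
  split.
    by move=> _; split => // a b _ _ _ _.
  move=> _ x /=; split; first by case.
  by move->; split => //; rewrite /closedf raddf0.
split.
  move=> H; split.
    move=> a b Ka Ca Kb Cb [y Hy].
    have Cl : closedf d (LJ d iJ y).
      rewrite /closedf; apply/eqP; rewrite -oppr_eq0 -LJd // Hy.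
      by rewrite LJB // Ka Kb subrr.
    have [t [Et Ht]] := h1 dd (proj1 (H (LJ d iJ y)) (conj (ex_intro _ y erefl) Cl)).
    exists (y - t); split.
      by rewrite /kerLJ LJB // Ht subrr.
    by rewrite raddfB /= Hy (exact_closed dd Et) subr0.
  move=> a Ca.
  have Cl : closedf d (LJ d iJ a) by apply: closedLJ.
  have [t [Et Ht]] := h1 dd (proj1 (H (LJ d iJ a)) (conj (ex_intro _ a erefl) Cl)).
  exists (a - t); split.
  - by rewrite /kerLJ LJB // Ht subrr.
  - by rewrite /closedf raddfB /= Ca (exact_closed dd Et) subrr.
  - by rewrite opprB addrC subrK.
case=> Hinj Hsurj x; split.
  case=> [[y Hy] Cx].
  have Kdy : kerLJ d iJ (d j y).
    by rewrite /kerLJ LJd // Hy Cx oppr0.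
  have [y' [Ky' Hy']] : exactJ d iJ (d j y - 0).
    apply: Hinj => //; rewrite ?/closedf ?/kerLJ ?dd ?raddf0 ?LJ0 //.
    by exists y; rewrite addr0.
  have Cyy : closedf d (y - y') by rewrite /closedf raddfB /= Hy' subr0 subrr.
  have [b [Kb Cb Ex]] := Hsurj _ Cyy.
  have := h3 iJ dd Ex.
  by rewrite !LJB // Ky' Kb !subr0 Hy.
move/(h1 dd)=> [t [Et <-]]; split; first by exists t.
by apply: closedLJ => //; apply: exact_closed.
Qed.
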